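(* Let $A_1,A_2$ be $n$-dimensional algebras and let $K:A_1\to A_2$ be an algebra isomorphism (identified with its matrix). For $s_1\in A_1$ put $s_2=Ks_1$. Then for all $s_1$ in an open ball centered at $\mathbf{1}_{A_1}$ consisting only of units, the following two collections of (path-independent) line integrals coincide: $$\Big\{\int_{\mathbf{1}_{A_1}}^{s_1}[L_1t_1^{-1}]\cdot\mathbf{d}t_1:\ L_1\in\mathfrak{u}_{A_1}\Big\}=\Big\{\int_{\mathbf{1}_{A_2}}^{s_2}[L_2t_2^{-1}]\cdot\mathbf{d}t_2:\ L_2\in\mathfrak{u}_{A_2}\Big\}.$$
   Context: An ''algebra'' is a real finite-dimensional unital associative algebra with underlying vector space $\mathbb{R}^n$, standard basis and topology, elements as column vectors $s=(x_1,\dots,x_n)^T$, $\mathbf{d}s=(dx_1,\dots,dx_n)^T$, and ''$\cdot$'' the Euclidean dot product. An uncurling metric of $A$ is a real symmetric $n\times n$ matrix $L$ with $d\big((s^{-1})^TL\,\mathbf{d}s\big)=0$ on an open ball centered at $\mathbf{1}_A$ consisting only of units; the anti-rotor $\mathfrak{u}_A$ is the vector space of all uncurling metrics. For $L\in\mathfrak{u}_A$ the integral $\int_{\mathbf{1}}^{s}[Lt^{-1}]\cdot\mathbf{d}t$ is path-independent within such a ball. *)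

(* Defs.v *)
From HB Require Import structures.
From mathcomp Require Import all_boot all_order all_algebra.
From mathcomp Require Import all_classical all_reals all_analysis.
Set Implicit Arguments. Unset Strict Implicit. Unset Printing Implicit Defensive.
Import Order.TTheory GRing.Theory Num.Theory.
Local Open Scope classical_set_scope.
Local Open Scope ring_scope.

(* A real n-dimensional unital associative algebra on R^n (column vectors),
   given by its structure constants: (e_i e_j)_k = sc i j k.  Bilinearity
   is automatic; associativity and the two-sided unit are required. *)
Definition amul_sc (R : realType) (n : nat) (sc : 'I_n -> 'I_n -> 'I_n -> R)
  (x y : 'cV[R]_n) : 'cV[R]_n :=
  \col_k (\sum_i \sum_j sc i j k * x i 0 * y j 0).

Record algebra (R : realType) (n : nat) := Algebra {
  sc : 'I_n -> 'I_n -> 'I_n -> R;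
  aone : 'cV[R]_n;
  amulA : forall x y z, amul_sc sc x (amul_sc sc y z) = amul_sc sc (amul_sc sc x y) z;
  amul1x : forall x, amul_sc sc aone x = x;
  amulx1 : forall x, amul_sc sc x aone = x }.

Definition amul (R : realType) (n : nat) (A : algebra R n) := amul_sc (sc A).

Definition is_inverse (R : realType) (n : nat) (A : algebra R n) (s t : 'cV[R]_n) :=
  amul A s t = aone A /\ amul A t s = aone A.
Definition isunit (R : realType) (n : nat) (A : algebra R n) (s : 'cV[R]_n) :=
  exists t, is_inverse A s t.
Definition ainv (R : realType) (n : nat) (A : algebra R n) (s : 'cV[R]_n) : 'cV[R]_n :=
  xget 0 [set t | is_inverse A s t].

Definition dotv (R : realType) (n : nat) (u v : 'cV[R]_n) : R := \sum_i u i 0 * v i 0.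
Definition eball (R : realType) (n : nat) (c : 'cV[R]_n) (r : R) : set 'cV[R]_n :=
  [set s | dotv (s - c) (s - c) < r ^+ 2].

Definition evec (R : realType) (n : nat) (j : 'I_n) : 'cV[R]_n := \col_k (k == j)%:R.

(* i-th component of the 1-form (s^{-1})^T L ds, i.e. (L s^{-1})_i *)
Definition omega (R : realType) (n : nat) (A : algebra R n) (L : 'M[R]_n)
  (i : 'I_n) (s : 'cV[R]_n) : R := (L *m ainv A s) i 0.

Definition partial (R : realType) (n : nat) (f : 'cV[R]_n -> R) (j : 'I_n) (s : 'cV[R]_n) : R :=
  derive1 (fun t : R => f (s + t *: @evec R n j)) 0.
Definition partial_exists (R : realType) (n : nat) (f : 'cV[R]_n -> R) (j : 'I_n) (s : 'cV[R]_n) :=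
  derivable (fun t : R => f (s + t *: @evec R n j)) 0 1.

Definition closed_at (R : realType) (n : nat) (A : algebra R n) (L : 'M[R]_n) (s : 'cV[R]_n) :=
  forall i j : 'I_n, partial_exists (omega A L i) j s /\
    partial (omega A L i) j s = partial (omega A L j) i s.

Definition uncurling (R : realType) (n : nat) (A : algebra R n) (L : 'M[R]_n) :=
  L^T = L /\
  exists r : R, 0 < r /\ (forall s, eball (aone A) r s -> isunit A s) /\
    (forall s, eball (aone A) r s -> closed_at A L s).
Definition antirotor (R : realType) (n : nat) (A : algebra R n) : set 'M[R]_n :=
  [set L | uncurling A L].

(* the (path-independent) line integral int_1^s [L t^{-1}] . dt, computed along
   the straight segment t = 1 + tau (s - 1), tau in [0,1] *)
Definition lineint (R : realType) (n : nat) (A : algebra R n) (L : 'M[R]_n) (s : 'cV[R]_n) : R :=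
  Rintegral lebesgue_measure `[0, 1]
    (fun tau : R => dotv (L *m ainv A (aone A + tau *: (s - aone A))) (s - aone A)).

Definition alg_iso (R : realType) (n : nat) (A1 A2 : algebra R n) (K : 'M[R]_n) :=
  K \in unitmx /\ K *m aone A1 = aone A2 /\
  forall x y, K *m amul A1 x y = amul A2 (K *m x) (K *m y).

(* Main.v *)
Require Import Defs.
From HB Require Import structures.
From mathcomp Require Import all_boot all_order all_algebra.
From mathcomp Require Import all_classical all_reals all_analysis.
From mathcomp Require Import ring lra.
Import numFieldNormedType.Exports.
Import Order.TTheory GRing.Theory Num.Theory.
Local Open Scope classical_set_scope.
Local Open Scope ring_scope.
Set Implicit Arguments. Unset Strict Implicit. Unset Printing Implicit Defensive.

Definition Ml (R : realType) (n : nat) (A : algebra R n) (x : 'cV[R]_n) : 'M[R]_n :=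
  \matrix_(k, j) \sum_i sc A i j k * x i 0.
Definition Mr (R : realType) (n : nat) (A : algebra R n) (y : 'cV[R]_n) : 'M[R]_n :=
  \matrix_(k, i) \sum_j sc A i j k * y j 0.

Lemma MlE (R : realType) (n : nat) (A : algebra R n) x y : Ml A x *m y = amul A x y.
Proof.
apply/matrixP => k l; rewrite /Ml /amul /amul_sc !mxE (ord1 l).
rewrite exchange_big /=; apply: eq_bigr => j _; rewrite mxE big_distrl /=.
by apply: eq_bigr => i _.
Qed.

Lemma MrE (R : realType) (n : nat) (A : algebra R n) x y : Mr A y *m x = amul A x y.
Proof.
apply/matrixP => k l; rewrite /Mr /amul /amul_sc !mxE (ord1 l).
apply: eq_bigr => i _; rewrite mxE big_distrl /=.
apply: eq_bigr => j _; ring.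
Qed.

Lemma evecE (R : realType) (n : nat) (X : 'M[R]_n) i j : (X *m @evec R n j) i 0 = X i j.
Proof.
rewrite mxE (bigD1 j) //= big1 ?addr0; first by rewrite mxE eqxx mulr1.
by move=> k /negbTE kj; rewrite mxE kj mulr0.
Qed.

Lemma mx_ext (R : realType) (n : nat) (X Y : 'M[R]_n) :
  (forall y : 'cV[R]_n, X *m y = Y *m y) -> X = Y.
Proof.
move=> H; apply/matrixP => i j; rewrite -!evecE; by rewrite H.
Qed.

Lemma MlM (R : realType) (n : nat) (A : algebra R n) x y :
  Ml A x *m Ml A y = Ml A (amul A x y).
Proof. by apply: mx_ext => z; rewrite -mulmxA !MlE /amul amulA. Qed.

Lemma Ml1 (R : realType) (n : nat) (A : algebra R n) : Ml A (aone A) = 1%:M.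
Proof. by apply: mx_ext => z; rewrite MlE mul1mx /amul amul1x. Qed.

Lemma inv_uniq (R : realType) (n : nat) (A : algebra R n) s t t' :
  is_inverse A s t -> is_inverse A s t' -> t = t'.
Proof.
move=> [h1 h2] [h3 h4].
have : amul A t (amul A s t') = amul A (amul A t s) t' by rewrite /amul amulA.
by rewrite h3 h2 /amul amulx1 amul1x.
Qed.

Lemma ainv_eq (R : realType) (n : nat) (A : algebra R n) s t :
  is_inverse A s t -> ainv A s = t.
move=> h; apply: (inv_uniq (s := s)); last exact: h.
rewrite /ainv; apply: (@xgetPex _ 0 [set t | is_inverse A s t]); by exists t.


Qed.

Lemma ainv_spec (R : realType) (n : nat) (A : algebra R n) s :
  isunit A s -> is_inverse A s (ainv A s).
Proof. by move=> [t h]; rewrite (ainv_eq h). Qed.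

Lemma ainv_nonunit (R : realType) (n : nat) (A : algebra R n) s :
  ~ isunit A s -> ainv A s = 0.
Proof.
move=> h; rewrite /ainv; apply: xgetPN => t ht; apply: h; by exists t.
Qed.

Lemma unitP (R : realType) (n : nat) (A : algebra R n) x :
  isunit A x <-> Ml A x \in unitmx.
Proof.
split.
  move=> [t [h1 h2]]; apply: (proj1 (@mulmx1_unit _ _ _ (Ml A t) _)).
  by rewrite MlM h1 Ml1.
move=> hu; exists (invmx (Ml A x) *m aone A).
have e1 : amul A x (invmx (Ml A x) *m aone A) = aone A.
  by rewrite -MlE mulmxA mulmxV // mul1mx.
split => //.
have : Ml A x *m Ml A (invmx (Ml A x) *m aone A) = 1%:M by rewrite MlM e1 Ml1.
move=> /(congr1 (mulmx (invmx (Ml A x)))); rewrite mulmxA mulVmx // mul1mx mulmx1 => E.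
rewrite -MlE E.
by rewrite {2}(_ : x = Ml A x *m aone A) ?mulmxA ?mulVmx ?mul1mx // MlE /amul amulx1.
Qed.

Lemma iso_inv (R : realType) (n : nat) (A1 A2 : algebra R n) K :
  alg_iso A1 A2 K -> alg_iso A2 A1 (invmx K).
Proof.
move=> [Ku [K1 KM]]; split; first by rewrite unitmx_inv.
split; first by rewrite -K1 mulKmx.
move=> x y.
rewrite -{1}(mulKVmx Ku x) -{1}(mulKVmx Ku y) -KM mulKmx //.
Qed.

Lemma iso_inverse (R : realType) (n : nat) (A1 A2 : algebra R n) K s t :
  alg_iso A1 A2 K -> is_inverse A1 s t -> is_inverse A2 (K *m s) (K *m t).
Proof.
move=> [Ku [K1 KM]] [h1 h2]; split; by rewrite -KM ?h1 ?h2.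
Qed.

Lemma ainv_iso (R : realType) (n : nat) (A1 A2 : algebra R n) K x :
  alg_iso A1 A2 K -> ainv A2 (K *m x) = K *m ainv A1 x.
Proof.
move=> hK.
case: (pselect (isunit A1 x)) => hx.
  apply: ainv_eq; apply: (iso_inverse hK); exact: ainv_spec.
have hx2 : ~ isunit A2 (K *m x).
  move=> [t ht]; apply: hx; exists (invmx K *m t).
  have := iso_inverse (iso_inv hK) ht.
  by rewrite mulKmx //; case: hK.
by rewrite !ainv_nonunit // mulmx0.
Qed.

Lemma dotvE (R : realType) (n : nat) (u v : 'cV[R]_n) : dotv u v = (u^T *m v) 0 0.
Proof. by rewrite /dotv mxE; apply: eq_bigr => i _; rewrite mxE. Qed.

Lemma lineint_iso (R : realType) (n : nat) (A1 A2 : algebra R n) K L s :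
  alg_iso A1 A2 K ->
  lineint A2 ((invmx K)^T *m L *m invmx K) (K *m s) = lineint A1 L s.
Proof.
move=> hK; have [Ku [K1 KM]] := hK.
rewrite /lineint; congr Rintegral; apply/funext => tau.
have -> : aone A2 + tau *: (K *m s - aone A2) = K *m (aone A1 + tau *: (s - aone A1)).
  by rewrite -K1 mulmxDr -scalemxAr mulmxBr.
rewrite (ainv_iso _ hK) -K1 -mulmxBr !dotvE.
set y := ainv A1 _; set w := s - aone A1.
have -> : (invmx K)^T *m L *m invmx K *m (K *m y) = (invmx K)^T *m (L *m y).
  by rewrite -!mulmxA (mulmxA (invmx K)) mulVmx // mul1mx.
by rewrite trmx_mul trmxK -mulmxA (mulmxA (invmx K)) mulVmx // mul1mx.
Qed.

Lemma coord_bound (R : realType) (n : nat) (x : 'cV[R]_n) k :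
  x k 0 * x k 0 <= dotv x x.
Proof.
rewrite /dotv (bigD1 k) //= lerDl; apply: sumr_ge0 => i _.
by rewrite -expr2 sqr_ge0.
Qed.

Lemma ball_bound (R : realType) (n : nat) (M : 'M[R]_n) (r : R) :
  0 < r -> exists rho, 0 < rho /\
    forall x, dotv x x < rho ^+ 2 -> dotv (M *m x) (M *m x) < r ^+ 2.
Proof.
move=> r0.
set S := \sum_i \sum_k `|M i k|.
have S0 : 0 <= S by apply: sumr_ge0 => i _; apply: sumr_ge0 => k _.
set N : R := n%:R.
have N0 : 0 <= N by rewrite /N ler0n.
set B := 1 + S.
have B0 : 0 < B by rewrite /B; lra.
set c := r / (N + 1).
have c0 : 0 < c by rewrite /c divr_gt0 //; lra.
exists (c / B); split; first by rewrite divr_gt0.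
move=> x hx.
have hk : forall k, `|x k 0| <= c / B.
  move=> k; have := coord_bound x k; move=> hxk; apply: ltW; rewrite ltr_norml.
  have rb : 0 < c / B by rewrite divr_gt0.
  move: (c / B) rb hx hxk => rho rb hx h; apply/andP; split; nra.
have hi : forall i, `|(M *m x) i 0| <= c.
  move=> i; rewrite mxE.
  apply: (le_trans (ler_norm_sum _ _ _)).
  apply: (@le_trans _ _ (\sum_k `|M i k| * (c / B))).
    apply: ler_sum => k _; rewrite normrM; apply: ler_wpM2l => //.
  rewrite -big_distrl /=.
  have : \sum_k `|M i k| <= B.
    apply: (@le_trans _ _ S); last by rewrite /B lerDr.
    rewrite /S [X in _ <= X](bigD1 i) //= lerDl.
    by apply: sumr_ge0 => j _; apply: sumr_ge0 => k _.
  move=> hB; apply: (le_trans (ler_wpM2r _ hB)); first by rewrite divr_ge0 // ltW.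
  by rewrite mulrC divfK // gt_eqF.
apply: (@le_lt_trans _ _ (\sum_(i < n) c * c)).
  apply: ler_sum => i _; have := hi i.
  have -> : (M *m x) i 0 * (M *m x) i 0 = `|(M *m x) i 0| * `|(M *m x) i 0|.
    by rewrite -normrM ger0_norm // -expr2 sqr_ge0.
  move=> h; apply: ler_pM => //.
rewrite sumr_const card_ord -mulr_natl -/N /c.
have h1 : N * (r / (N + 1) * (r / (N + 1))) = r ^+ 2 * (N / ((N + 1) * (N + 1))).
  by field; lra.
rewrite h1 -[ltRHS]mulr1 ltr_pM2l ?exprn_gt0 //.
by rewrite ltr_pdivrMr; nra.
Qed.

Lemma ainv_Ml (R : realType) (n : nat) (A : algebra R n) x :
  Ml A x \in unitmx -> ainv A x = invmx (Ml A x) *m aone A.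
Proof.
move=> hu; apply: ainv_eq.
have e1 : amul A x (invmx (Ml A x) *m aone A) = aone A.
  by rewrite -MlE mulmxA mulmxV // mul1mx.
split => //.
have : Ml A x *m Ml A (invmx (Ml A x) *m aone A) = 1%:M by rewrite MlM e1 Ml1.
move=> /(congr1 (mulmx (invmx (Ml A x)))); rewrite mulmxA mulVmx // mul1mx mulmx1 => E.
rewrite -MlE E.
by rewrite {2}(_ : x = Ml A x *m aone A) ?mulmxA ?mulVmx ?mul1mx // MlE /amul amulx1.
Qed.

Lemma Ml_lin (R : realType) (n : nat) (A : algebra R n) u v (t : R) :
  Ml A (u + t *: v) = Ml A u + t *: Ml A v.
Proof.
apply/matrixP => k j; rewrite !mxE big_distrr -big_split /=.
by apply: eq_bigr => i _; rewrite !mxE; ring.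
Qed.

Definition Ppoly (R : realType) (n : nat) (A : algebra R n) (u v : 'cV[R]_n) : 'M[{poly R}]_n :=
  \matrix_(k, j) ((Ml A u k j)%:P + (Ml A v k j)%:P * 'X).

Lemma Ppoly_eval (R : realType) (n : nat) (A : algebra R n) u v (t : R) :
  map_mx (horner_eval t) (Ppoly A u v) = Ml A (u + t *: v).
Proof.
rewrite Ml_lin; apply/matrixP => k j; rewrite !mxE /horner_eval.
by rewrite hornerD hornerMX !hornerC mulrC.
Qed.

Lemma ainv_rat (R : realType) (n : nat) (A : algebra R n) u v (t : R) a :
  ainv A (u + t *: v) a 0 =
  ((\adj (Ppoly A u v) *m map_mx polyC (aone A)) a 0).[t] / (\det (Ppoly A u v)).[t].
Proof.
have hd : (\det (Ppoly A u v)).[t] = \det (Ml A (u + t *: v)).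
  by rewrite -Ppoly_eval det_map_mx.
have hp : ((\adj (Ppoly A u v) *m map_mx polyC (aone A)) a 0).[t] =
          (\adj (Ml A (u + t *: v)) *m aone A) a 0.
  rewrite -Ppoly_eval -map_mx_adj.
  rewrite [in RHS](_ : aone A = map_mx (horner_eval t) (map_mx polyC (aone A))); last first.
    by apply/matrixP => i j; rewrite !mxE /horner_eval hornerC.
  by rewrite -map_mxM [in RHS]mxE.
rewrite hd hp.
case: (boolP (Ml A (u + t *: v) \in unitmx)) => hu.
  rewrite ainv_Ml // /invmx hu -scalemxAl mxE mulrC //.
have -> : \det (Ml A (u + t *: v)) = 0.
  by apply/eqP; move: hu; rewrite unitmxE unitfE negbK.
rewrite invr0 mulr0 ainv_nonunit ?mxE //.
by move/unitP; rewrite (negbTE hu).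
Qed.

Lemma det_rat (R : realType) (n : nat) (A : algebra R n) u v (t : R) :
  (\det (Ppoly A u v)).[t] = \det (Ml A (u + t *: v)).
Proof. by rewrite -Ppoly_eval det_map_mx. Qed.

Lemma cont_ainv (R : realType) (n : nat) (A : algebra R n) u v a :
  isunit A u -> (fun t : R => ainv A (u + t *: v) a 0) @ (0:R) --> ainv A u a 0.
Proof.
move=> hu.
have e : (fun t : R => ainv A (u + t *: v) a 0) =
  (fun t => ((\adj (Ppoly A u v) *m map_mx polyC (aone A)) a 0).[t] *
            ((\det (Ppoly A u v)).[t])^-1).
  by apply/funext => t; rewrite ainv_rat.
have q0 : (\det (Ppoly A u v)).[0] != 0.
  by rewrite det_rat scale0r addr0 -unitfE -unitmxE; apply/unitP.
have -> : ainv A u a 0 = ((\adj (Ppoly A u v) *m map_mx polyC (aone A)) a 0).[0] *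
            ((\det (Ppoly A u v)).[0])^-1.
  by rewrite -ainv_rat scale0r addr0.
rewrite e; apply: cvgM; first exact: continuous_horner.
by apply: cvgV => //; exact: continuous_horner.
Qed.

Lemma cont_lin (R : realType) (n : nat) (A : algebra R n) u v (N : 'M[R]_n) i :
  isunit A u -> (fun t : R => (N *m ainv A (u + t *: v)) i 0) @ (0:R) --> (N *m ainv A u) i 0.
Proof.
move=> hu; rewrite mxE; under eq_fun do rewrite mxE.
apply: cvg_big; first exact: add_continuous. move=> a _.
apply: cvgM; first exact: cvg_cst.
exact: cont_ainv.
Qed.

Lemma near_unit (R : realType) (n : nat) (A : algebra R n) u v :
  isunit A u -> \forall t \near (0 : R), isunit A (u + t *: v).
Proof.
move=> hu.
have q0 : (\det (Ppoly A u v)).[0] != 0.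
  by rewrite det_rat scale0r addr0 -unitfE -unitmxE; apply/unitP.
have := @cvgr_neq0 _ _ _ _ _ _ _ (@continuous_horner _ (\det (Ppoly A u v)) 0) q0.
have F0 : Filter (nbhs (0:R)) by typeclasses eauto.
move=> /(_ F0); apply: filterS => t.
rewrite det_rat => h; apply/(unitP A); by rewrite unitmxE unitfE.
Qed.

Lemma subE (R : realType) (m n : nat) (X Y : 'M[R]_(m, n)) i j :
  (X - Y) i j = X i j - Y i j.
Proof. by rewrite !mxE. Qed.

Lemma scaleE (R : realType) (m n : nat) (c : R) (X : 'M[R]_(m, n)) i j :
  (c *: X) i j = c * X i j.
Proof. by rewrite !mxE. Qed.

Lemma Mr_scale (R : realType) (n : nat) (A : algebra R n) (c : R) w :
  Mr A (c *: w) = c *: Mr A w.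
Proof.
apply/matrixP => k j; rewrite !mxE big_distrr /=.
by apply: eq_bigr => i _; rewrite !mxE; ring.
Qed.

Lemma inv_diff (R : realType) (n : nat) (A : algebra R n) u x :
  isunit A u -> isunit A x ->
  ainv A x - ainv A u = Mr A (amul A (u - x) (ainv A u)) *m ainv A x.
Proof.
move=> hu hx; have [hx1 hx2] := ainv_spec hx; have [hu1 hu2] := ainv_spec hu.
rewrite MrE -!MrE mulmxBr !MrE hu1 -MlE mulmxBr !MlE.
rewrite /amul amulx1 amulA -/(amul A (ainv A x) x) hx2 /amul amul1x //.
Qed.

Lemma deriv_ainv (R : realType) (n : nat) (A : algebra R n) (L : 'M[R]_n) u v i :
  isunit A u ->
  derivable (fun t : R => (L *m ainv A (u + t *: v)) i 0) 0 1 /\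
  derive1 (fun t : R => (L *m ainv A (u + t *: v)) i 0) 0 =
    - (L *m (Ml A (ainv A u) *m Mr A (ainv A u)) *m v) i 0.
Proof.
move=> hu.
set F := fun t : R => (L *m ainv A (u + t *: v)) i 0.
set N := L *m Mr A (amul A v (ainv A u)).
have key : \forall t \near (0:R)^',
    - (N *m ainv A (u + t *: v)) i 0 = t^-1 *: ((F \o shift 0) (t *: 1) - F 0).
  rewrite /dnbhs near_withinE /=.
  near=> t => ht.
  have hx : isunit A (u + t *: v) by near: t; exact: near_unit.
  rewrite /F addr0 scale0r addr0 /=.
  have hd : u - (u + t *: v) = (-t) *: v by rewrite opprD addrA subrr add0r scaleNr.
  rewrite [t%:A]mulr1 -subE -mulmxBr inv_diff // hd -MrE -scalemxAr Mr_scale MrE.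
  rewrite -scalemxAl -scalemxAr scaleE /N -mulmxA.
  set z := (L *m _) i 0.
  rewrite -[t^-1 *: _]/(t^-1 * _).
  by rewrite mulrA mulrN mulVf // mulN1r.
have Gc := cvgN (@cont_lin _ _ A u v N i hu).
have Q : (fun h : R => h^-1 *: ((F \o shift 0) (h *: 1) - F 0)) @ (0:R)^' -->
           - (N *m ainv A u) i 0.
  apply: cvg_trans; first exact: (near_eq_cvg key).
  apply: cvg_within_filter; apply: Gc; typeclasses eauto.
split; first by apply/cvg_ex; eexists; exact: Q.
rewrite derive1E /derive (cvg_lim _ Q) //.
rewrite /N -!mulmxA MrE MrE MlE /amul amulA //.
Unshelve. all: by end_near.
Qed.

Lemma partial_val (R : realType) (n : nat) (A : algebra R n) (L : 'M[R]_n) u a b :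
  isunit A u ->
  partial_exists (omega A L a) b u /\
  partial (omega A L a) b u =
    - (L *m (Ml A (ainv A u) *m Mr A (ainv A u))) a b.
Proof.
move=> hu; have [h1 h2] := @deriv_ainv _ _ A L u (@evec R n b) a hu.
split; first exact: h1.
by rewrite /partial /omega h2 -evecE.
Qed.

Lemma uncurl_iso (R : realType) (n : nat) (A1 A2 : algebra R n) K L :
  alg_iso A1 A2 K -> uncurling A1 L ->
  uncurling A2 ((invmx K)^T *m L *m invmx K).
Proof.
move=> hK [Lsym [r [r0 [hun hcl]]]]; have [Ku [K1 KM]] := hK.
split; first by rewrite !trmx_mul trmxK Lsym mulmxA.
have [rho [rho0 hb]] := ball_bound (invmx K) r0.
have inball : forall s, eball (aone A2) rho s -> eball (aone A1) r (invmx K *m s).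
  move=> s; rewrite /eball /= => h.
  have -> : invmx K *m s - aone A1 = invmx K *m (s - aone A2).
    by rewrite mulmxBr -K1 mulKmx.
  exact: hb.
exists rho; split => //; split.
  move=> s /inball /hun [t ht].
  exists (K *m t); have := iso_inverse hK ht; by rewrite mulKVmx.
move=> s /inball hs; set u := invmx K *m s.
have hu := hun _ hs; have hc := hcl _ hs.
set W := Ml A1 (ainv A1 u) *m Mr A1 (ainv A1 u).
have Bsym : forall a b, (L *m W) a b = (L *m W) b a.
  move=> a b; have [_ e] := hc a b.
  have [_ e1] := @partial_val _ _ A1 L u a b hu.
  have [_ e2] := @partial_val _ _ A1 L u b a hu.
  by move: e; rewrite e1 e2 => /oppr_inj.
have eom : forall i j,
  (fun t : R => omega A2 ((invmx K)^T *m L *m invmx K) i (s + t *: @evec R n j)) =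
  (fun t : R => (((invmx K)^T *m L) *m ainv A1 (u + t *: (invmx K *m @evec R n j))) i 0).
  move=> i j; apply/funext => t; rewrite /omega.
  have -> : s + t *: @evec R n j = K *m (u + t *: (invmx K *m @evec R n j)).
    by rewrite mulmxDr -scalemxAr !mulKVmx.
  by rewrite (ainv_iso _ hK) -!mulmxA (mulmxA (invmx K)) mulVmx // mul1mx.
move=> i j.
have [d1 v1] := @deriv_ainv _ _ A1 ((invmx K)^T *m L) u (invmx K *m @evec R n j) i hu.
have [d2 v2] := @deriv_ainv _ _ A1 ((invmx K)^T *m L) u (invmx K *m @evec R n i) j hu.
split; first by rewrite /partial_exists eom.
rewrite /partial !eom v1 v2 -/W; congr (- _).
clearbody W.
rewrite !mulmxA !evecE.
have BT : (L *m W)^T = L *m W by apply/matrixP => a b; rewrite mxE Bsym.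
have XT : ((invmx K)^T *m (L *m W) *m invmx K)^T = (invmx K)^T *m (L *m W) *m invmx K.
  by rewrite trmx_mul trmx_mul BT trmxK mulmxA.
have eX : (invmx K)^T *m L *m W *m invmx K = (invmx K)^T *m (L *m W) *m invmx K.
  by rewrite !mulmxA.
by rewrite eX -[in RHS]XT [in RHS]mxE.
Qed.

Lemma sub_iso (R : realType) (n : nat) (A1 A2 : algebra R n) K s :
  alg_iso A1 A2 K ->
  [set lineint A1 L1 s | L1 in antirotor A1] `<=`
  [set lineint A2 L2 (K *m s) | L2 in antirotor A2].
Proof.
move=> hK _ [L hL <-]; exists ((invmx K)^T *m L *m invmx K).
  exact: (uncurl_iso hK hL).
exact: lineint_iso.
Qed.

Unset Implicit Arguments.

Theorem theorem3p3 (R : realType) (n : nat) (A1 A2 : algebra R n) (K : 'M[R]_n)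
  (r : R) (s1 : 'cV[R]_n) :
  alg_iso A1 A2 K ->
  0 < r -> (forall s, eball (aone A1) r s -> isunit A1 s) ->
  eball (aone A1) r s1 ->
  [set lineint A1 L1 s1 | L1 in antirotor A1] =
  [set lineint A2 L2 (K *m s1) | L2 in antirotor A2].
Proof.
move=> hK _ _ _; apply/seteqP; split; first exact: sub_iso.
have := @sub_iso _ _ A2 A1 (invmx K) (K *m s1) (iso_inv hK).
by rewrite mulKmx //; case: hK.
Qed.
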